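(* Let $A\in\mathbb{C}^{m\times n}$ have rank $r$ and satisfy $\mathrm{rank}(A^{\sim}AA^{\sim})=\mathrm{rank}(A)$. Then there exists a unique matrix $X\in\mathbb{C}^{n\times n}$ such that $AX=0$, $X^{\sim}=X$, $X^2=X$, $\mathrm{rank}(X)=n-r$; there exists a unique matrix $Y\in\mathbb{C}^{m\times m}$ such that $YA=0$, $Y^{\sim}=Y$, $Y^2=Y$, $\mathrm{rank}(Y)=m-r$; and, for these $X,Y$, there exists a unique matrix $Z\in\mathbb{C}^{n\times m}$ such that $$\mathrm{rank}\begin{pmatrix}A&I_m-Y\\ I_n-X&Z\end{pmatrix}=\mathrm{rank}(A).$$ Furthermore, $X=I_n-A^{\mathfrak{m}}A$, $Y=I_m-AA^{\mathfrak{m}}$ and $Z=A^{\mathfrak{m}}$.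
   Context: For a positive integer $k$, the Minkowski metric matrix of order $k$ is $G_k=\mathrm{diag}(1,-I_{k-1})$ (with $G_1=(1)$). For $M\in\mathbb{C}^{p\times q}$, the Minkowski adjoint is $M^{\sim}=G_qM^*G_p$, where $M^*$ is the conjugate transpose. The Minkowski inverse of $A\in\mathbb{C}^{m\times n}$, denoted $A^{\mathfrak{m}}$, is the (unique) matrix $W\in\mathbb{C}^{n\times m}$ with $AWA=A$, $WAW=W$, $(AW)^{\sim}=AW$, $(WA)^{\sim}=WA$, when it exists. *)

(* Defs.v *)
From HB Require Import structures.
From mathcomp Require Import all_boot all_order all_algebra.
Set Implicit Arguments. Unset Strict Implicit. Unset Printing Implicit Defensive.
Import Order.TTheory GRing.Theory Num.Theory.
Local Open Scope ring_scope.

(* Complex numbers: any numeric closed field C (e.g. the complex numbers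
   R[i] over a real type, or algC); conjugation is Num.conj (z^* ). *)

Definition mink_G (C : numClosedFieldType) (k : nat) : 'M[C]_k :=
  \matrix_(i < k, j < k)
    (if i == j then (if nat_of_ord i == 0%N then 1 else -1) else 0).

Definition ctrmx (C : numClosedFieldType) (p q : nat) (M : 'M[C]_(p, q))
  : 'M[C]_(q, p) := (map_mx (fun z => z^*) M)^T.

Definition madj (C : numClosedFieldType) (p q : nat) (M : 'M[C]_(p, q))
  : 'M[C]_(q, p) := mink_G C q *m ctrmx M *m mink_G C p.

Definition is_mink_inverse (C : numClosedFieldType) (m n : nat)
  (A : 'M[C]_(m, n)) (W : 'M[C]_(n, m)) : Prop :=
  [/\ A *m W *m A = A, W *m A *m W = W,
      madj (A *m W) = A *m W & madj (W *m A) = W *m A].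

(* Main.v *)
Require Import Defs.
From HB Require Import structures.
From mathcomp Require Import all_boot all_order all_algebra.
Import Order.TTheory GRing.Theory Num.Theory.
Local Open Scope ring_scope.

Set Implicit Arguments. Unset Strict Implicit.

Section Adj.
Variable C : numClosedFieldType.

Definition gd k : 'rV[C]_k := \row_(j < k) (if nat_of_ord j == 0%N then 1 else -1).

Lemma mink_GE k : mink_G C k = diag_mx (gd k).
Proof. by apply/matrixP => i j; rewrite !mxE; case: eqP => [->|]; rewrite ?mulr1n ?mulr0n. Qed.

Lemma mink_GG k : mink_G C k *m mink_G C k = 1%:M.
Proof.
rewrite mink_GE mulmx_diag; apply/matrixP => i j; rewrite !mxE.
by case: (_ == 0%N); rewrite ?mulr1 ?mulrNN ?mulr1.
Qed.

Lemma ctrmxE p q (M : 'M[C]_(p, q)) : ctrmx M = (map_mx Num.Def.conjC M)^T.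
Proof. by []. Qed.

Lemma ctrmxM p q r (A : 'M[C]_(p, q)) (B : 'M[C]_(q, r)) :
  ctrmx (A *m B) = ctrmx B *m ctrmx A.
Proof. by rewrite !ctrmxE map_mxM trmx_mul. Qed.

Lemma ctrmxK p q (A : 'M[C]_(p, q)) : ctrmx (ctrmx A) = A.
Proof. by rewrite !ctrmxE -map_trmx trmxK map_mxCK. Qed.

Lemma ctrmxD p q (A B : 'M[C]_(p, q)) : ctrmx (A + B) = ctrmx A + ctrmx B.
Proof. by rewrite !ctrmxE map_mxD linearD. Qed.

Lemma ctrmxN p q (A : 'M[C]_(p, q)) : ctrmx (- A) = - ctrmx A.
Proof. by rewrite !ctrmxE map_mxN linearN. Qed.

Lemma ctrmx1 p : ctrmx (1%:M : 'M[C]_p) = 1%:M.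
Proof. by rewrite !ctrmxE map_mx1 trmx1. Qed.

Lemma ctrmxG p : ctrmx (mink_G C p) = mink_G C p.
Proof.
rewrite ctrmxE mink_GE map_diag_mx tr_diag_mx; congr diag_mx.
by apply/matrixP => i j; rewrite !mxE; case: (_ == 0%N); rewrite ?rmorph1 ?rmorphN1.
Qed.

Lemma ctrmx_rank p q (A : 'M[C]_(p, q)) : \rank (ctrmx A) = \rank A.
Proof. by rewrite ctrmxE mxrank_tr mxrank_map. Qed.

Lemma madjM p q r (A : 'M[C]_(p, q)) (B : 'M[C]_(q, r)) :
  madj (A *m B) = madj B *m madj A.
Proof.
rewrite /madj ctrmxM !mulmxA -[_ *m mink_G C q *m mink_G C q]mulmxA mink_GG mulmx1.
by [].
Qed.

Lemma madjK p q (A : 'M[C]_(p, q)) : madj (madj A) = A.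
Proof.
by rewrite /madj !ctrmxM ctrmxK !ctrmxG !mulmxA mink_GG mul1mx -mulmxA mink_GG mulmx1.
Qed.

Lemma madjD p q (A B : 'M[C]_(p, q)) : madj (A + B) = madj A + madj B.
Proof. by rewrite /madj ctrmxD mulmxDr mulmxDl. Qed.

Lemma madjN p q (A : 'M[C]_(p, q)) : madj (- A) = - madj A.
Proof. by rewrite /madj ctrmxN mulmxN mulNmx. Qed.

Lemma madj1 p : madj (1%:M : 'M[C]_p) = 1%:M.
Proof. by rewrite /madj ctrmx1 mulmx1 mink_GG. Qed.

Lemma madj0 p q : madj (0 : 'M[C]_(p, q)) = 0.
Proof. by rewrite -(subrr (0 : 'M[C]_(p,q))) madjD madjN subrr. Qed.

Lemma rank_invl p q k (L : 'M[C]_(p, q)) (L' : 'M[C]_(q, p)) (M : 'M[C]_(q, k)) :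
  L' *m L = 1%:M -> \rank (L *m M) = \rank M.
Proof.
move=> h; apply/eqP; rewrite eqn_leq mxrankM_maxr /=.
by rewrite -{1}[M]mul1mx -h -mulmxA mxrankM_maxr.
Qed.

Lemma rank_invr p q k (R : 'M[C]_(p, q)) (R' : 'M[C]_(q, p)) (M : 'M[C]_(k, p)) :
  R *m R' = 1%:M -> \rank (M *m R) = \rank M.
Proof.
move=> h; apply/eqP; rewrite eqn_leq mxrankM_maxl /=.
by rewrite -{1}[M]mulmx1 -h mulmxA mxrankM_maxl.
Qed.

Lemma madj_rank p q (A : 'M[C]_(p, q)) : \rank (madj A) = \rank A.
Proof.
by rewrite /madj (rank_invr _ (mink_GG _)) (rank_invl _ (mink_GG _)) ctrmx_rank.
Qed.
End Adj.

Section Main.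
Variable C : numClosedFieldType.

Lemma sub_eqrank m1 m2 n (A : 'M[C]_(m1, n)) (B : 'M[C]_(m2, n)) :
  (A <= B)%MS -> (\rank B <= \rank A)%N -> (B <= A)%MS.
Proof.
by move=> h le; rewrite -(mxrank_leqif_sup h).2 eqn_leq le mxrankS.
Qed.

Lemma mink_exists m n (A : 'M[C]_(m, n)) :
  \rank (madj A *m A *m madj A) = \rank A -> exists W, is_mink_inverse A W.
Proof.
move=> HA; set A' := madj A; set T := A' *m A *m A'.
have rA' : \rank A' = \rank A by rewrite madj_rank.
have hAA : madj A' = A by rewrite /A' madjK.
have [Q hQ] : exists Q, A' = Q *m T.
  apply/submxP; apply: sub_eqrank; first exact: submxMl.
  by rewrite HA rA'.
have [P hP] : exists P, A' = T *m P.
  have : (A'^T <= T^T)%MS.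
    apply: sub_eqrank; first by rewrite /T -mulmxA trmx_mul submxMl.
    by rewrite !mxrank_tr HA rA'.
  case/submxP => D hD; exists D^T.
  by rewrite -[A']trmxK hD trmx_mul trmxK.
have QP : Q *m A' = A' *m P.
  rewrite {1}hP mulmxA. exact: (congr1 (mulmx^~ P) (esym hQ)).
have AAP : A' *m A *m (A' *m P) = A' by rewrite [RHS]hP /T !mulmxA.
have QAA : Q *m A' *m A *m A' = A' by rewrite [RHS]hQ /T !mulmxA.
set W := A' *m P.
have AAE : A' *m (A *m W) = A' by rewrite mulmxA.
have hE : madj (A *m W) = A *m W.
  have e1 : madj (A *m W) *m A = A.
    by have := congr1 (@madj C _ _) AAE; rewrite madjM hAA.
  have e2 : madj (A *m W) *m (A *m W) = A *m W by rewrite mulmxA e1.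
  by rewrite -{1}e2 madjM madjK e2.
have hF : madj (W *m A) = W *m A.
  have f1 : W *m A *m A' = A' by rewrite /W -QP.
  have f2 : A *m madj (W *m A) = A.
    by have := congr1 (@madj C _ _) f1; rewrite madjM hAA.
  have f3 : W *m A *m madj (W *m A) = W *m A by rewrite -mulmxA f2.
  by rewrite -{1}f3 madjM madjK f3.
exists W; rewrite /is_mink_inverse; split => //.
- have e1 : madj (A *m W) *m A = A.
    by have := congr1 (@madj C _ _) AAE; rewrite madjM hAA.
  by rewrite -[in RHS]e1 hE.
- have key : Q *m A' *m A *m (A' *m P) = Q *m A'.
    by rewrite -[Q *m A' *m A]mulmxA -mulmxA AAP.
  by rewrite /W -{1}QP key QP.
Qed.

Lemma proj_unique k (F X : 'M[C]_k) :
  F *m F = F -> madj F = F -> X *m X = X -> madj X = X ->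
  F *m X = 0 -> X *m F = 0 -> \rank X = (k - \rank F)%N -> X = 1%:M - F.
Proof.
move=> FF aF XX aX FX XF rX.
have h1 : X = X *m (1%:M - F) by rewrite mulmxBr mulmx1 XF subr0.
have rK : \rank (1%:M - F) = (k - \rank F)%N.
  rewrite -mxrank_ker; apply/eqP; rewrite eqn_leq !mxrankS //.
    have e : kermx F = kermx F *m (1%:M - F) by rewrite mulmxBr mulmx1 mulmx_ker subr0.
    by rewrite {1}e; exact: submxMl.
  by apply/sub_kermxP; rewrite mulmxBl mul1mx FF subrr.
have : (1%:M - F <= X)%MS.
  by apply: sub_eqrank; [rewrite {1}h1; exact: submxMl | rewrite rK rX].
case/submxP => D hD.
have : (1%:M - F) *m X = 1%:M - F by rewrite hD -mulmxA XX.
by rewrite mulmxBl mul1mx FX subr0.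
Qed.

End Main.

Lemma block_rank (C : numClosedFieldType) m n (A : 'M[C]_(m,n)) (W Z : 'M[C]_(n,m)) :
  A *m W *m A = A ->
  \rank (block_mx A (A *m W) (W *m A) Z) = (\rank A + \rank (Z - W *m A *m W)%R)%N.
Proof.
move=> AWA.
pose L : 'M[C]_(m + n) := block_mx 1%:M 0 (-W) 1%:M.
pose L' : 'M[C]_(m + n) := block_mx 1%:M 0 W 1%:M.
pose R : 'M[C]_(n + m) := block_mx 1%:M (-W) 0 1%:M.
pose R' : 'M[C]_(n + m) := block_mx 1%:M W 0 1%:M.
have LL : L' *m L = 1%:M.
  rewrite mulmx_block scalar_mx_block !mul1mx !mulmx1 !mul0mx !mulmx0 !addr0 !add0r.
  by rewrite subrr.
have RR : R *m R' = 1%:M.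
  rewrite mulmx_block scalar_mx_block !mul1mx !mulmx1 !mul0mx !mulmx0 !addr0 !add0r.
  by congr block_mx; apply/matrixP => i j; rewrite !mxE subrr.
set M := block_mx _ _ _ _.
have e : \rank (L *m M *m R) = \rank M by rewrite (rank_invr _ RR) (rank_invl _ LL).
rewrite -e -rank_diag_block_mx; congr (\rank _).
rewrite /L /M /R !mulmx_block !mul1mx !mulmx1 !mul0mx !mulmx0 ?addr0 ?add0r.
congr block_mx.
- by rewrite mulmxN addNr.
- by rewrite mulNmx addNr.
- by rewrite mulNmx addNr mul0mx add0r mulNmx mulmxA addrC.
Qed.
Theorem theorem7p5 (C : numClosedFieldType) (m n : nat)
  (Hm : (0 < m)%N) (Hn : (0 < n)%N) (A : 'M[C]_(m, n))
  (HA : \rank (madj A *m A *m madj A) = \rank A) :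
  let r := \rank A in
  let PX := fun X : 'M[C]_n =>
    [/\ A *m X = 0, madj X = X, X *m X = X & \rank X = (n - r)%N] in
  let PY := fun Y : 'M[C]_m =>
    [/\ Y *m A = 0, madj Y = Y, Y *m Y = Y & \rank Y = (m - r)%N] in
  let PZ := fun (X : 'M[C]_n) (Y : 'M[C]_m) (Z : 'M[C]_(n, m)) =>
    \rank (block_mx A (1%:M - Y) (1%:M - X) Z) = r in
  [/\ (exists! X, PX X),
      (exists! Y, PY Y),
      (forall X Y, PX X -> PY Y -> exists! Z, PZ X Y Z) &
      exists W, is_mink_inverse A W /\
        forall X Y Z, PX X -> PY Y -> PZ X Y Z ->
          [/\ X = 1%:M - W *m A, Y = 1%:M - A *m W & Z = W]].
Proof.
move=> r PX PY PZ.
have [W [h1 h2 h3 h4]] := mink_exists HA.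
have rF : \rank (W *m A) = r.
  apply/eqP; rewrite eqn_leq mxrankM_maxr /=.
  by rewrite /r -{1}h1 -mulmxA mxrankM_maxr.
have rE : \rank (A *m W) = r.
  apply/eqP; rewrite eqn_leq mxrankM_maxl /=.
  by rewrite /r -{1}h1 mxrankM_maxl.
have FF : W *m A *m (W *m A) = W *m A by rewrite mulmxA h2.
have EE : A *m W *m (A *m W) = A *m W by rewrite mulmxA h1.
have madjB : forall k (F : 'M[C]_k), madj F = F -> madj (1%:M - F) = 1%:M - F.
  by move=> k F hF; rewrite madjD madjN madj1 hF.
have idB : forall k (F : 'M[C]_k), F *m F = F -> (1%:M - F) *m (1%:M - F) = 1%:M - F.
  move=> k F hF; rewrite mulmxBl mul1mx mulmxBr mulmx1 hF subrr subr0 //.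
have rB : forall k (F : 'M[C]_k), F *m F = F -> \rank (1%:M - F) = (k - \rank F)%N.
  move=> k F hF; rewrite -mxrank_ker; apply/eqP; rewrite eqn_leq !mxrankS //.
    have e : kermx F = kermx F *m (1%:M - F) by rewrite mulmxBr mulmx1 mulmx_ker subr0.
    by rewrite {1}e; exact: submxMl.
  by apply/sub_kermxP; rewrite mulmxBl mul1mx hF subrr.
have PX0 : PX (1%:M - W *m A).
  split; [by rewrite mulmxBr mulmx1 mulmxA h1 subrr | exact: madjB | exact: idB | ].
  by rewrite rB // rF.
have PY0 : PY (1%:M - A *m W).
  split; [by rewrite mulmxBl mul1mx h1 subrr | exact: madjB | exact: idB | ].
  by rewrite rB // rE.
have uX : forall X, PX X -> X = 1%:M - W *m A.
  move=> X [hAX hXs hXX hXr]; apply: proj_unique => //.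
  - by rewrite -mulmxA hAX mulmx0.
  - have := congr1 (@madj C _ _) (etrans (esym (mulmxA W A X)) (etrans (congr1 (mulmx W) hAX) (mulmx0 _ _))).
    by rewrite madjM h4 hXs madj0.
  - by rewrite rF.
have uY : forall Y, PY Y -> Y = 1%:M - A *m W.
  move=> Y [hYA hYs hYY hYr]; apply: proj_unique => //.
  - have e : Y *m (A *m W) = 0 by rewrite mulmxA hYA mul0mx.
    by have := congr1 (@madj C _ _) e; rewrite madjM h3 hYs madj0.
  - by rewrite mulmxA hYA mul0mx.
  - by rewrite rE.
have eZ : forall Z, PZ (1%:M - W *m A) (1%:M - A *m W) Z <-> Z = W.
  move=> Z; rewrite /PZ !subKr block_rank // /r; split.
    move/eqP; rewrite -{2}[\rank A]addn0 eqn_add2l mxrank_eq0 subr_eq0 h2.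
    by move/eqP.
  by move=> ->; rewrite h2 subrr mxrank0 addn0.
split.
- by exists (1%:M - W *m A); split => // X' /uX ->.
- by exists (1%:M - A *m W); split => // Y' /uY ->.
- move=> X Y /uX -> /uY ->; exists W; split; first by apply/eZ.
  by move=> Z' /eZ ->.
- exists W; split; first by [].
  by move=> X Y Z /uX -> /uY -> /eZ ->.
Qed.
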